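(* Let $X$ and $Y$ be finite $T_0$-spaces. If $X$ is homotopy equivalent to $Y$, then $\overline{\mathrm{rank}}(X)=\overline{\mathrm{rank}}(Y)$, where $\overline{\mathrm{rank}}(X):=|X|-\mathrm{rank}(X_M)$.
   Context: A finite $T_0$-space is identified with a finite poset via $x\le y$ iff $U_x\subseteq U_y$, where $U_x$ is the minimal open set containing $x$. For a labelling $X=\{x_1,\dots,x_n\}$, $X_M=(x_{i,j})$ is the $n\times n$ matrix with $x_{i,j}=0$ if $x_i\le x_j$ and $x_{i,j}=1$ otherwise; its rank (as a real matrix) does not depend on the labelling. *)

(* Defs.v *)
From HB Require Import structures.
From mathcomp Require Import all_boot all_order all_algebra.
From mathcomp Require Import reals.
Set Implicit Arguments. Unset Strict Implicit. Unset Printing Implicit Defensive.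
Import Order.TTheory GRing.Theory Num.Theory.

(* On a finite type, arbitrary unions are unions of subfamilies of O,
   and arbitrary intersections of open sets reduce to finite ones. *)
Definition is_topology (T : finType) (O : {set {set T}}) : Prop :=
  [/\ set0 \in O, [set: T] \in O,
      (forall F : {set {set T}}, F \subset O -> \bigcup_(A in F) A \in O)
    & (forall A B, A \in O -> B \in O -> A :&: B \in O)].

Definition is_T0 (T : finType) (O : {set {set T}}) : Prop :=
  forall x y : T, x != y -> exists2 U, U \in O & (x \in U) != (y \in U).

Definition finT0space (T : finType) (O : {set {set T}}) : Prop :=
  is_topology O /\ is_T0 O.

Definition continuousF (X Y : finType) (OX : {set {set X}}) (OY : {set {set Y}})
  (f : X -> Y) : Prop :=
  forall V, V \in OY -> f @^-1: V \in OX.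

Local Open Scope ring_scope.

(* Continuity of H : X x [0,1] -> Y, with X x [0,1] carrying the product
   topology of (X, OX) and the subspace topology of [0,1] in R:
   preimages of open sets are open in X x [0,1] (basic opens U x (ball /\ [0,1])). *)
Definition continuousH (R : realType) (X Y : finType) (OX : {set {set X}})
  (OY : {set {set Y}}) (H : X -> R -> Y) : Prop :=
  forall V, V \in OY ->
    forall x (t : R), 0 <= t <= 1 -> H x t \in V ->
      exists2 U, U \in OX & x \in U /\
        exists2 e : R, 0 < e &
          forall x' t', x' \in U -> 0 <= t' <= 1 -> `|t' - t| < e -> H x' t' \in V.

Definition homotopic (R : realType) (X Y : finType) (OX : {set {set X}})
  (OY : {set {set Y}}) (f g : X -> Y) : Prop :=
  exists H : X -> R -> Y, [/\ continuousH OX OY H,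
     (forall x, H x 0 = f x) & (forall x, H x 1 = g x)].

Definition homotopy_equivalent (R : realType) (X Y : finType)
  (OX : {set {set X}}) (OY : {set {set Y}}) : Prop :=
  exists (f : X -> Y) (g : Y -> X),
    [/\ continuousF OX OY f, continuousF OY OX g,
        homotopic R OX OX (g \o f) id & homotopic R OY OY (f \o g) id].

Definition minimal_open (T : finType) (O : {set {set T}}) (x : T) : {set T} :=
  \bigcap_(U in O | x \in U) U.

Definition fle (T : finType) (O : {set {set T}}) (x y : T) : bool :=
  minimal_open O x \subset minimal_open O y.

Definition XM (R : realType) (T : finType) (O : {set {set T}}) : 'M[R]_#|T| :=
  \matrix_(i < #|T|, j < #|T|)
     (if fle O (enum_val i) (enum_val j) then 0 else 1).

Definition rankbar (R : realType) (T : finType) (O : {set {set T}}) : nat :=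
  (#|T| - \rank (XM R O))%N.

(* Main.v *)
Require Import Defs.
From mathcomp Require Import all_boot all_order all_algebra.
From mathcomp Require Import reals.
From mathcomp Require Import lra zify.
From Stdlib Require Import Classical.
Set Implicit Arguments. Unset Strict Implicit. Unset Printing Implicit Defensive.
Import Order.TTheory GRing.Theory Num.Theory.
Local Open Scope ring_scope.

Inductive fence (A : Type) (r : A -> A -> Prop) : A -> A -> Prop :=
| fence0 a : fence r a a
| fenceS a b c : r a b -> fence r b c -> fence r a c.

Lemma fence_trans A r (a b c : A) : fence r a b -> fence r b c -> fence r a c.
Proof. by elim=> // x y z rxy _ IH /IH; apply: fenceS. Qed.

Lemma fence1 A r (a b : A) : r a b -> fence r a b.
Proof. by move=> h; apply: fenceS h (fence0 _ _). Qed.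

Lemma fence_map A B (r : A -> A -> Prop) (r' : B -> B -> Prop) (F : A -> B) a b :
  (forall x y, r x y -> r' (F x) (F y)) -> fence r a b -> fence r' (F a) (F b).
Proof.
move=> h; elim=> [x|x y z /h rxy _ IH]; [exact: fence0| exact: fenceS rxy IH].
Qed.

Definition mono (A B : Type) (leA : rel A) (leB : rel B) (f : A -> B) :=
  forall x y, leA x y -> leB (f x) (f y).

Definition adjG A B (leA : rel A) (leB : rel B) (k l : A -> B) : Prop :=
  [/\ mono leA leB k, mono leA leB l &
     (forall x, leB (k x) (l x)) \/ (forall x, leB (l x) (k x))].

Definition adjC (T : finType) (le : rel T) (C : {set T}) (k l : T -> T) : Prop :=
  [/\ (forall x, x \in C -> k x \in C /\ l x \in C),
      (forall x y, x \in C -> y \in C -> le x y -> le (k x) (k y) /\ le (l x) (l y)) &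
      (forall x, x \in C -> le (k x) (l x)) \/ (forall x, x \in C -> le (l x) (k x))].

Definition beat (T : finType) (le : rel T) (S : {set T}) x : Prop :=
  x \in S /\ exists2 y, y \in S & y != x /\
   ((le y x /\ forall z, z \in S -> z != x -> le z x -> le z y) \/
    (le x y /\ forall z, z \in S -> z != x -> le x z -> le y z)).

Definition chi (R : realType) (T : finType) (le : rel T) (S : {set T}) : Prop :=
  exists v : T -> R, (forall z, z \in S -> \sum_(w in S | le w z) v w = 1)
     /\ \sum_(w in S) v w = 1.

Lemma beat_dual (T : finType) (le : rel T) S x :
  beat (fun a b => le b a) S x -> beat le S x.
Proof.
case=> xS [y yS [yx [[h1 h2]|[h1 h2]]]]; split=> //; exists y => //; split=> //.
  by right.
by left.
Qed.

Lemma card_down_lt (T : finType) (le : rel T) (C : {set T}) z x :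
  reflexive le -> antisymmetric le -> transitive le ->
  x \in C -> z != x -> le z x ->
  (#|[set w in C | le w z]| < #|[set w in C | le w x]|)%N.
Proof.
move=> rf an tr xC zx lzx; apply: proper_card; rewrite properE; apply/andP; split.
  by apply/subsetP=> w; rewrite !inE => /andP[-> /tr]; apply.
apply/subsetPn; exists x; rewrite !inE ?xC ?rf //=.
apply/negP=> lxz; move/negP: zx; apply; apply/eqP; apply: an; by rewrite lzx lxz.
Qed.

Lemma stong_le (T : finType) (le : rel T) (C : {set T}) (k : T -> T) :
  reflexive le -> antisymmetric le -> transitive le ->
  (forall x, ~ beat le C x) ->
  (forall x, x \in C -> k x \in C) ->
  (forall x y, x \in C -> y \in C -> le x y -> le (k x) (k y)) ->
  (forall x, x \in C -> le (k x) x) -> forall x, x \in C -> k x = x.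
Proof.
move=> rf an tr nb kC km kle.
suff H : forall n x, x \in C -> (#|[set w in C | le w x]| < n)%N -> k x = x.
  by move=> x xC; exact: H _ x xC (ltnSn _).
elim=> [|n IH] x xC //; rewrite ltnS => hn.
have IHz : forall z, z \in C -> z != x -> le z x -> k z = z.
  move=> z zC zx lzx; apply: IH => //.
  exact: leq_trans (card_down_lt rf an tr xC zx lzx) hn.
apply/eqP/negP=> /negP kx; apply: (nb x); split=> //; exists (k x); first exact: kC.
split=> //; left; split; first exact: kle.
by move=> z zC zx lzx; rewrite -(IHz z zC zx lzx); apply: km.
Qed.

Lemma stong (T : finType) (le : rel T) (C : {set T}) (k : T -> T) :
  reflexive le -> antisymmetric le -> transitive le ->
  (forall x, ~ beat le C x) ->
  (forall x, x \in C -> k x \in C) ->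
  (forall x y, x \in C -> y \in C -> le x y -> le (k x) (k y)) ->
  (forall x, x \in C -> le (k x) x) \/ (forall x, x \in C -> le x (k x)) ->
  forall x, x \in C -> k x = x.
Proof.
move=> rf an tr nb kC km [kle|kge]; first exact: stong_le.
apply: (@stong_le T (fun a b => le b a)) => //.
- by move=> a b /andP[h1 h2]; apply: an; rewrite h1 h2.
- by move=> a b c h1 h2; apply: tr h2 h1.
- by move=> x /beat_dual; apply: nb.
- by move=> x y xC yC; apply: km.
Qed.

Lemma fence_id (T : finType) (le : rel T) (C : {set T}) (a b : T -> T) :
  reflexive le -> antisymmetric le -> transitive le ->
  (forall x, ~ beat le C x) -> fence (adjC le C) a b ->
  (forall x, x \in C -> b x = x) -> forall x, x \in C -> a x = x.
Proof.
move=> rf an tr nb; elim=> // p q r [hC hm hc] _ IH /IH qid.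
apply: (stong rf an tr nb).
- by move=> x /hC [].
- by move=> x y xC yC lxy; case: (hm x y xC yC lxy).
case: hc => h; [left|right] => x xC; have := h x xC; by rewrite qid.
Qed.

Lemma sum_D1 (R : realType) (T : finType) (S : {set T}) (P : pred T) (F : T -> R) x :
  x \in S -> \sum_(w in S | P w) F w = (if P x then F x else 0) + \sum_(w in S :\ x | P w) F w.
Proof.
move=> xS; rewrite big_mkcond [in RHS]big_mkcond (bigD1 x) //= [in RHS](bigD1 x) //=.
rewrite xS !inE eqxx /= add0r; congr (_ + _).
by apply: eq_bigr => w wx; rewrite !inE wx.
Qed.

Lemma merge_sum (R : realType) (T : finType) (S : {set T}) (P : pred T) (v : T -> R) x y :
  x \in S -> y \in S -> y != x -> P x = P y ->
  \sum_(w in S :\ x | P w) (v w + (w == y)%:R * v x) = \sum_(w in S | P w) v w.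
Proof.
move=> xS yS yx Pxy; rewrite big_split /= (sum_D1 P v xS) addrC; congr (_ + _).
have yS' : y \in S :\ x by rewrite !inE yx.
rewrite (sum_D1 P _ yS') eqxx mul1r Pxy big1 ?addr0 // => w.
by rewrite !inE => /andP[/andP[/negbTE -> _] _]; rewrite mul0r.
Qed.

Lemma sumT_D1 (R : realType) (T : finType) (S : {set T}) (F : T -> R) x :
  x \in S -> \sum_(w in S) F w = F x + \sum_(w in S :\ x) F w.
Proof.
move=> xS; have := sum_D1 xpredT F xS; rewrite /=.
by under eq_bigl do rewrite andbT; under [in RHS]eq_bigl do rewrite andbT.
Qed.

Lemma chi_down (R : realType) (T : finType) (le : rel T) (S : {set T}) x y :
  reflexive le -> antisymmetric le -> transitive le ->
  x \in S -> y \in S -> y != x -> le y x ->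
  (forall z, z \in S -> z != x -> le z x -> le z y) ->
  (chi R le (S :\ x) <-> chi R le S).
Proof.
move=> rf an tr xS yS yx lyx hb.
have yS' : y \in S :\ x by rewrite !inE yx.
have eqd : forall w, (w \in S :\ x) && le w x = (w \in S :\ x) && le w y.
  move=> w; rewrite !inE; apply/andP/andP => [[/andP[wx wS] lwx]|[/andP[wx wS] lwy]].
    by split; [rewrite wx wS | apply: hb].
  by split; [rewrite wx wS | apply: tr lyx].
split=> [[v [hv hs]]|[v [hv hs]]].
  exists (fun w => if w == x then 0 else v w); split.
    move=> z zS; rewrite (sum_D1 _ _ xS) eqxx if_same add0r.
    have -> : \sum_(w in S :\ x | le w z) (if w == x then 0 else v w) =
              \sum_(w in S :\ x | le w z) v w.
      by apply: eq_bigr => w; rewrite !inE => /andP[/andP[/negbTE -> _] _].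
    case: (eqVneq z x) => [->|zx]; last by apply: hv; rewrite !inE zx.
    by rewrite (eq_bigl _ _ eqd) hv.
  rewrite (sumT_D1 _ xS) eqxx add0r -hs.
  by apply: eq_bigr => w; rewrite !inE => /andP[/negbTE -> _].
have vx0 : v x = 0.
  have := hv x xS; rewrite (sum_D1 _ _ xS) rf (eq_bigl _ _ eqd).
  have -> : \sum_(w in S :\ x | le w y) v w = \sum_(w in S | le w y) v w.
    rewrite (sum_D1 _ _ xS); case: ifP => [lxy|_]; last by rewrite add0r.
    by move/negP: yx; case; apply/eqP; apply: an; rewrite lxy lyx.
  by rewrite hv // => /(canRL (addrK 1)); rewrite subrr.
exists v; split.
  move=> z; rewrite !inE => /andP[zx zS].
  by rewrite -(hv z zS) (sum_D1 _ _ xS) vx0 if_same add0r.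
by rewrite -hs (sumT_D1 _ xS) vx0 add0r.
Qed.

Lemma chi_up (R : realType) (T : finType) (le : rel T) (S : {set T}) x y :
  reflexive le -> antisymmetric le -> transitive le ->
  x \in S -> y \in S -> y != x -> le x y ->
  (forall z, z \in S -> z != x -> le x z -> le y z) ->
  (chi R le (S :\ x) <-> chi R le S).
Proof.
move=> rf an tr xS yS yx lxy hb.
have Pxy : forall z, z \in S -> z != x -> le x z = le y z.
  move=> z zS zx; apply/idP/idP; first exact: hb.
  exact: tr.
split=> [[v' [hv hs]]|[v [hv hs]]].
  pose a := 1 - \sum_(w in S :\ x | le w x) v' w.
  pose v := fun w => if w == x then a else if w == y then v' y - a else v' w.
  have mv : forall P : pred T, P x = P y ->
      \sum_(w in S | P w) v w = \sum_(w in S :\ x | P w) v' w.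
    move=> P hP; rewrite -(merge_sum v xS yS yx hP).
    apply: eq_bigr => w; rewrite !inE => /andP[/andP[wx _] _].
    rewrite /v (negbTE wx) eqxx; case: eqP => [->|_].
      by rewrite mul1r subrK.
    by rewrite mul0r addr0.
  exists v; split.
    move=> z zS; case: (eqVneq z x) => [->|zx].
      rewrite (sum_D1 _ _ xS) rf /v eqxx.
      have -> : \sum_(w in S :\ x | le w x)
                 (if w == x then a else if w == y then v' y - a else v' w) =
               \sum_(w in S :\ x | le w x) v' w.
        apply: eq_bigr => w; rewrite !inE => /andP[/andP[wx _] lwx].
        rewrite (negbTE wx); case: eqP => // wy; move: lwx; rewrite wy => lyx.
        by move/negP: yx; case; apply/eqP; apply: an; rewrite lxy lyx.
      by rewrite /a subrK.
    by rewrite mv ?(Pxy z zS zx) // hv // !inE zx.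
  have := mv xpredT erefl.
  under eq_bigl do rewrite andbT; under [in RHS]eq_bigl do rewrite andbT.
  by move=> ->.
exists (fun w => v w + (w == y)%:R * v x); split.
  move=> z; rewrite !inE => /andP[zx zS].
  by rewrite merge_sum // ?(Pxy z zS zx) // hv.
have := merge_sum v xS yS yx (P := xpredT) erefl.
under eq_bigl do rewrite andbT; under [in RHS]eq_bigl do rewrite andbT.
by move=> ->.
Qed.

Lemma chi_beat (R : realType) (T : finType) (le : rel T) (S : {set T}) x :
  reflexive le -> antisymmetric le -> transitive le -> beat le S x ->
  (chi R le (S :\ x) <-> chi R le S).
Proof.
move=> rf an tr [xS [y yS [yx [[l h]|[l h]]]]].
  exact: (chi_down R rf an tr xS yS yx l h).
exact: (chi_up R rf an tr xS yS yx l h).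
Qed.

Lemma core_exists (R : realType) (T : finType) (le : rel T) :
  reflexive le -> antisymmetric le -> transitive le ->
  exists C : {set T}, exists rho : T -> T,
   [/\ mono le le rho, (forall x, rho x \in C), (forall x, x \in C -> rho x = x),
       fence (adjG le le) rho id & (forall x, ~ beat le C x) /\
       (chi R le C <-> chi R le setT)].
Proof.
move=> rf an tr.
suff H : forall n (S : {set T}), (#|S| < n)%N ->
   (exists rho : T -> T, [/\ mono le le rho, (forall x, rho x \in S),
       (forall x, x \in S -> rho x = x) & fence (adjG le le) rho id]) ->
   (chi R le S <-> chi R le setT) ->
   exists C : {set T}, exists rho : T -> T,
   [/\ mono le le rho, (forall x, rho x \in C), (forall x, x \in C -> rho x = x),
       fence (adjG le le) rho id & (forall x, ~ beat le C x) /\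
       (chi R le C <-> chi R le setT)].
  apply: (H _ setT (ltnSn _)) => //; exists id; split.
  - by move=> ??.
  - by move=> x; rewrite inE.
  - by [].
  - exact: fence0.
elim=> // n IH S hS [rho [rm rS rid rf0]] hchi.
case: (classic (exists x, beat le S x)) => [[x bx]|nb]; last first.
  exists S, rho; split => //; split => // x bx; apply: nb; by exists x.
have bx' := bx; case: bx' => xS [y yS [yx hyb]].
pose rho' := fun t => if rho t == x then y else rho t.
have rm' : mono le le rho'.
  move=> a b lab; have := rm a b lab; rewrite /rho'.
  case: eqP => ha; case: eqP => hb.
  - by rewrite rf.
  - rewrite ha => lxb; case: hyb => [[l h]|[l h]].
      exact: tr lxb.
    by apply: h => //; apply/eqP.
  - rewrite hb => lax; case: hyb => [[l h]|[l h]].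
      by apply: h => //; apply/eqP.
    exact: tr l.
  - by [].
apply: (IH (S :\ x)).
- by move: hS; rewrite (cardsD1 x S) xS add1n ltnS.
- exists rho'; split => //.
  + move=> t; rewrite /rho'; case: eqP => [_|/eqP h].
      by rewrite !inE yx yS.
    by rewrite !inE h rS.
  + move=> t; rewrite !inE => /andP[tx tS]; rewrite /rho' rid //.
    by rewrite (negbTE tx).
  + apply: fenceS rf0; split => //.
    case: hyb => [[l h]|[l h]]; [left|right] => t; rewrite /rho';
      case: eqP => [->|_]; by rewrite ?rf.
- by rewrite (chi_beat R rf an tr bx).
Qed.

Lemma chi_iso (R : realType) (T U : finType) (leT : rel T) (leU : rel U)
  (CT : {set T}) (CU : {set U}) (F : T -> U) (G : U -> T) :
  (forall x, x \in CT -> F x \in CU) -> (forall y, y \in CU -> G y \in CT) ->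
  (forall x, x \in CT -> G (F x) = x) -> (forall y, y \in CU -> F (G y) = y) ->
  mono leT leU F -> mono leU leT G ->
  chi R leT CT -> chi R leU CU.
Proof.
move=> FC GC GF FG mF mG [v [hv hs]].
have key : forall P : pred U, forall Q : pred T,
    (forall u, u \in CT -> P (F u) = Q u) ->
    \sum_(w in CU | P w) v (G w) = \sum_(u in CT | Q u) v u.
  move=> P Q hPQ.
  rewrite (reindex_onto F G); last by move=> w /andP[wC _]; apply: FG.
  apply: eq_big => [u|u /andP[/andP[FuC _] /eqP ->] //].
  case uC: (u \in CT).
    by rewrite FC //= hPQ // GF // eqxx andbT.
  apply/negbTE/negP => /andP[/andP[FuC _] /eqP h].
  by move: uC; rewrite -h GC.
exists (v \o G); split.
  move=> z zC; rewrite /= -(hv (G z) (GC z zC)); apply: key => u uC.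
  apply/idP/idP => [/mG|/mF]; first by rewrite GF.
  by rewrite FG.
rewrite -hs; rewrite /=.
have := key xpredT xpredT (fun _ _ => erefl).
move=> h; rewrite (eq_bigl _ _ (fun w => andbT (w \in CT))) in h.
by rewrite -h; apply: eq_bigl => w; rewrite andbT.
Qed.

Lemma sum_ord_T (R : realType) (T : finType) (P : pred T) (F : T -> R) :
  \sum_(t | P t) F t = \sum_(i < #|T| | P (enum_val i)) F (enum_val i).
Proof. by rewrite (reindex (@enum_val T predT)) //=; exact: onW_bij (enum_val_bij T). Qed.

Lemma zeta_free (R : realType) (T : finType) (le : rel T) (u : T -> R) :
  reflexive le -> antisymmetric le -> transitive le ->
  (forall j, \sum_(i | le i j) u i = 0) -> forall j, u j = 0.
Proof.
move=> rf an tr hu.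
suff H : forall n j, (#|[set w in setT | le w j]| < n)%N -> u j = 0.
  by move=> j; exact: H _ j (ltnSn _).
elim=> [|n IH] j //; rewrite ltnS => hn.
have := hu j; rewrite (bigD1 j) ?rf //= big1 ?addr0 // => i /andP[lij ij].
apply: IH; apply: leq_trans hn; apply: card_down_lt => //; by rewrite inE.
Qed.

Lemma rank_char (R : realType) (T : finType) (le : rel T) :
  reflexive le -> antisymmetric le -> transitive le ->
  let M := \matrix_(i < #|T|, j < #|T|) (if le (enum_val i) (enum_val j) then 0 else 1 : R) in
  (chi R le setT -> (#|T| - \rank M = 1)%N) /\ (~ chi R le setT -> (#|T| - \rank M = 0)%N).
Proof.
move=> rf an tr M.
set n := #|T|.
pose le' := fun i j : 'I_n => le (enum_val i) (enum_val j).
have rf' : reflexive le' by move=> i; apply: rf.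
have an' : antisymmetric le'.
  by move=> i j h; apply: enum_val_inj; apply: an.
have tr' : transitive le' by move=> i j k; apply: tr.
have uM : forall (u : 'rV[R]_n) j,
    (u *m M) 0 j = \sum_i u 0 i - \sum_(i | le' i j) u 0 i.
  move=> u j; rewrite !mxE (bigID (fun i => le' i j)) /=.
  rewrite [X in _ = X - _](bigID (fun i => le' i j)) /= addrAC subrr add0r.
  rewrite big1 ?add0r; last by move=> i; rewrite /M mxE /le' => ->; rewrite mulr0.
  by apply: eq_bigr => i; rewrite /M mxE /le' => /negbTE ->; rewrite mulr1.
pose Z := \matrix_(i < n, j < n) (if le' i j then 1 else 0 : R).
have uZ : forall (u : 'rV[R]_n) j, (u *m Z) 0 j = \sum_(i | le' i j) u 0 i.
  move=> u j; rewrite !mxE [RHS]big_mkcond /=; apply: eq_bigr => i _.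
  by rewrite /Z mxE; case: ifP; rewrite ?mulr1 ?mulr0.
have Zfree : row_free Z.
  apply: inj_row_free => u h; apply/rowP => j; rewrite mxE.
  apply: (zeta_free (le := le') (u := fun i => u 0 i)) => // k.
  by rewrite -uZ h mxE.
have rZ : \rank Z = n by apply/eqP.
have rM1 : (n <= 1 + \rank M)%N.
  pose J := (const_mx 1 : 'cV[R]_n) *m (const_mx 1 : 'rV[R]_n).
  have ZJ : Z = J + - M.
    apply/matrixP => i j; rewrite /Z /M !mxE big_ord1 !mxE /le' mulr1.
    by case: ifP; rewrite ?subr0 ?subrr.
  rewrite -{1}rZ ZJ; apply: leq_trans (mxrank_add _ _) _; rewrite mxrank_opp leq_add2r.
  exact: leq_trans (mxrankM_maxl _ _) (rank_leq_col _).
have rMn : (\rank M <= n)%N by exact: rank_leq_row.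
split.
  move=> [v [hv hs]].
  pose u := \row_i v (enum_val i) : 'rV[R]_n.
  have sT : forall P : pred T, \sum_(w in setT | P w) v w = \sum_(i | P (enum_val i)) u 0 i.
    move=> P; rewrite sum_ord_T; apply: eq_big => [i|i _]; by rewrite ?inE ?mxE.
  have sT1 : \sum_(w in setT) v w = \sum_i u 0 i.
    rewrite sum_ord_T; apply: eq_big => [i|i _]; by rewrite ?inE ?mxE.
  have huM : u *m M = 0.
    apply/rowP => j; rewrite uM mxE -sT1 hs.
    have := hv (enum_val j) (in_setT _); rewrite sT => ->.
    by rewrite subrr.
  have u0 : u != 0.
    apply/eqP=> u0; move: hs; rewrite sT1 big1 => [/eqP|i _]; first by rewrite eq_sym oner_eq0.
    by rewrite u0 mxE.
  have nf : ~~ row_free M.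
    by apply/negP => /mulmx_free_eq0 h; move: u0; rewrite -h huM eqxx.
  move: nf; rewrite /row_free => /negP nf.
  have : \rank M != n by apply/negP.
  move: rM1 rMn; set r := \rank M; lia.
move=> nchi.
have : row_free M.
  apply: inj_row_free => u h.
  have hj : forall j, \sum_(i | le' i j) u 0 i = \sum_i u 0 i.
    move=> j; have := uM u j; rewrite h mxE => /eqP; rewrite eq_sym subr_eq0 => /eqP ->.
    by [].
  set s := \sum_i u 0 i in hj.
  case: (eqVneq s 0) => [s0|sn0].
    apply/rowP => j; rewrite mxE.
    apply: (zeta_free (le := le') (u := fun i => u 0 i)) => // k.
    by rewrite hj s0.
  exfalso; apply: nchi.
  exists (fun t => u 0 (enum_rank t) / s); split.
    move=> z _; rewrite sum_ord_T -mulr_suml.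
    have -> : \sum_(i < n | (enum_val i \in setT) && le (enum_val i) z)
        u 0 (enum_rank (enum_val i)) = \sum_(i | le' i (enum_rank z)) u 0 i.
      apply: eq_big => [i|i _]; by rewrite ?inE /le' ?enum_rankK ?enum_valK.
    by rewrite hj divff.
  rewrite sum_ord_T -mulr_suml.
  have -> : \sum_(i < n | enum_val i \in setT) u 0 (enum_rank (enum_val i)) = s.
    rewrite /s; apply: eq_big => [i|i _]; by rewrite ?inE ?enum_valK.
  by rewrite divff.
by rewrite /row_free => /eqP ->; rewrite subnn.
Qed.

Lemma mo_in (T : finType) (O : {set {set T}}) x : x \in minimal_open O x.
Proof. by apply/bigcapP => U /andP[_ ->]. Qed.

Lemma mo_open (T : finType) (O : {set {set T}}) x : is_topology O -> minimal_open O x \in O.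
Proof.
case=> _ OT _ OI; apply: (big_ind (fun A => A \in O)) => //.
by move=> U /andP[].
Qed.

Lemma mo_sub (T : finType) (O : {set {set T}}) x U :
  U \in O -> x \in U -> minimal_open O x \subset U.
Proof. by move=> UO xU; apply: (bigcap_inf U); rewrite UO xU. Qed.

Lemma fle_mem (T : finType) (O : {set {set T}}) x y :
  is_topology O -> fle O x y = (x \in minimal_open O y).
Proof.
move=> tO; apply/idP/idP => [h|h].
  exact: (subsetP h) _ (mo_in O x).
by apply: mo_sub => //; apply: mo_open.
Qed.

Lemma fle_po (T : finType) (O : {set {set T}}) :
  finT0space O ->
  [/\ reflexive (fle O), antisymmetric (fle O) & transitive (fle O)].
Proof.
case=> tO t0; split.
- by move=> x; apply: subxx.
- move=> x y /andP[hxy hyx]; apply/eqP/negP => /negP /t0 [U UO].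
  case xU: (x \in U); case yU: (y \in U) => // _.
  + by have := subsetP (mo_sub UO xU) y (subsetP hyx _ (mo_in O y)); rewrite yU.
  + by have := subsetP (mo_sub UO yU) x (subsetP hxy _ (mo_in O x)); rewrite xU.
- by move=> y x z h1 h2; apply: subset_trans h1 h2.
Qed.

Lemma cont_mono (X Y : finType) (OX : {set {set X}}) (OY : {set {set Y}}) (f : X -> Y) :
  is_topology OX -> is_topology OY -> continuousF OX OY f ->
  mono (fle OX) (fle OY) f.
Proof.
move=> tX tY cf x y; rewrite !fle_mem // => hx.
have V := cf _ (mo_open (f y) tY).
have yV : y \in f @^-1: minimal_open OY (f y) by rewrite inE mo_in.
by have := subsetP (mo_sub V yV) x hx; rewrite inE.
Qed.

Lemma slice_mono (R : realType) (X Y : finType) (OX : {set {set X}}) (OY : {set {set Y}})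
  (H : X -> R -> Y) t :
  is_topology OX -> is_topology OY -> continuousH OX OY H -> 0 <= t <= 1 ->
  mono (fle OX) (fle OY) (fun x => H x t).
Proof.
move=> tX tY cH t01 x y; rewrite !fle_mem // => hx.
have [U UO [yU [e e0 he]]] := cH _ (mo_open (H y t) tY) y t t01 (mo_in _ _).
apply: he => //; first exact: (subsetP (mo_sub UO yU)).
by rewrite subrr normr0.
Qed.

Lemma fin_min (R : realType) (X : finType) (P : X -> R -> Prop) :
  (forall x e e', 0 < e' -> e' <= e -> P x e -> P x e') ->
  (forall x, exists2 e, 0 < e & P x e) -> exists2 e : R, 0 < e & forall x, P x e.
Proof.
move=> mon h.
suff: forall s : seq X, exists2 e : R, 0 < e & forall x, x \in s -> P x e.
  case/(_ (enum X)) => e e0 he; exists e => // x; apply: he; by rewrite mem_enum.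
elim=> [|a s [e e0 he]]; first by exists 1.
have [ea ea0 hea] := h a.
have m0 : 0 < Order.min e ea by rewrite lt_min e0 ea0.
exists (Order.min e ea) => // x; rewrite inE => /orP[/eqP->|xs].
  by apply: mon hea => //; rewrite ge_min lexx orbT.
by apply: mon (he x xs) => //; rewrite ge_min lexx.
Qed.

Lemma slice_local (R : realType) (X Y : finType) (OX : {set {set X}}) (OY : {set {set Y}})
  (H : X -> R -> Y) t :
  is_topology OX -> is_topology OY -> continuousH OX OY H -> 0 <= t <= 1 ->
  exists2 e : R, 0 < e & forall x t', 0 <= t' <= 1 -> `|t' - t| < e ->
     fle OY (H x t') (H x t).
Proof.
move=> tX tY cH t01.
apply: (fin_min (P := fun x e => forall t', 0 <= t' <= 1 -> `|t' - t| < e ->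
     fle OY (H x t') (H x t))).
  move=> x e e' e'0 le' hP t' t'01 lt; apply: hP => //; exact: lt_le_trans le'.
move=> x.
have [U UO [xU [e e0 he]]] := cH _ (mo_open (H x t) tY) x t t01 (mo_in _ _).
exists e => // t' t'01 lt; rewrite fle_mem //; exact: he.
Qed.

Lemma homotopic_fence (R : realType) (X Y : finType) (OX : {set {set X}})
  (OY : {set {set Y}}) (f g : X -> Y) :
  is_topology OX -> is_topology OY ->
  mono (fle OX) (fle OY) f -> mono (fle OX) (fle OY) g ->
  homotopic R OX OY f g -> fence (adjG (fle OX) (fle OY)) f g.
Proof.
move=> tX tY mf mg [H [cH H0 H1]].
have rfY : reflexive (fle OY) by move=> y; apply: subxx.
pose adj := adjG (fle OX) (fle OY).
pose h := fun (t : R) (x : X) => H x t.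
have hm : forall t, 0 <= t <= 1 -> mono (fle OX) (fle OY) (h t).
  by move=> t t01; apply: slice_mono.
have t0 : (0 <= (0:R) <= 1) by apply/andP; split; lra.
have t1 : (0 <= (1:R) <= 1) by apply/andP; split; lra.
pose A := (fun t : R => 0 <= t <= 1 /\ fence adj (h 0) (h t)).
have A0 : A 0 by split => //; exact: fence0.
have ubA : forall t, A t -> t <= 1 by move=> t [/andP[_ ->] _].
have hsA : classical_sets.has_sup A.
  by split; [exists 0 | exists 1].
set c := sup A.
have c0 : 0 <= c by apply: sup_upper_bound.
have c1 : c <= 1 by apply: ge_sup => //; exists 0.
have c01 : 0 <= c <= 1 by rewrite c0 c1.
have [e e0 he] := slice_local tX tY cH c01.
have [a [a01 fa] lta] := sup_adherent e0 hsA.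
have ac : a <= c by apply: sup_upper_bound.
have Ac : A c.
  split => //; apply: fence_trans fa (fence1 _); split; [exact: hm|exact: hm|left => x].
  apply: he => //; rewrite distrC ger0_norm ?subr_ge0 //; rewrite -/c in lta; lra.
have c_eq : c = 1.
  case: (ltP c 1) => [clt|cge]; last by apply/eqP; rewrite eq_le c1 cge.
  pose t := Order.min (c + e / 2) 1.
  have tc : c < t by rewrite lt_min clt andbT; lra.
  have tc' : t <= c + e / 2 by rewrite ge_min lexx.
  have t01 : 0 <= t <= 1 by apply/andP; split; [lra| rewrite ge_min lexx orbT].
  have At : A t.
    split => //; apply: fence_trans (proj2 Ac) (fence1 _).
    split; [exact: hm|exact: hm|right => x].
    apply: he => //; rewrite ger0_norm ?subr_ge0; [lra|exact: ltW].
  have := sup_upper_bound hsA At; rewrite -/c; lra.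
have K : fence adj (h 0) (h 1) by rewrite -c_eq; exact: (proj2 Ac).
apply: (fenceS (b := h 0)).
  by split => //; [exact: hm| left => x; rewrite /h H0 rfY].
apply: fence_trans K (fence1 _).
by split => //; [exact: hm| left => x; rewrite /h H1 rfY].
Qed.

Lemma core_fix (A B : finType) (leA : rel A) (leB : rel B) (CA : {set A})
  (rA : A -> A) (rB : B -> B) (p : A -> B) (q : B -> A) :
  reflexive leA -> antisymmetric leA -> transitive leA ->
  mono leA leB p -> mono leB leA q -> mono leA leA rA -> mono leB leB rB ->
  (forall x, rA x \in CA) -> (forall x, x \in CA -> rA x = x) ->
  fence (adjG leB leB) rB id -> fence (adjG leA leA) (q \o p) id ->
  (forall x, ~ beat leA CA x) ->
  forall x, x \in CA -> rA (q (rB (p x))) = x.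
Proof.
move=> rf an tr mp mq mrA mrB rAC rAid FB FA nb.
have F1 : fence (adjG leA leA) (fun x => rA (q (rB (p x)))) (fun x => rA (q (id (p x)))).
  apply: (fence_map (F := fun k : B -> B => fun x => rA (q (k (p x))))) FB.
  move=> k l [mk ml hc]; split.
  - by move=> x y lxy; apply/mrA/mq/mk/mp.
  - by move=> x y lxy; apply/mrA/mq/ml/mp.
  - by case: hc => h; [left|right] => x; apply/mrA/mq/h.
have F2 : fence (adjG leA leA) (fun x => rA ((q \o p) x)) (fun x => rA (id x)).
  apply: (fence_map (F := fun k : A -> A => fun x => rA (k x))) FA.
  move=> k l [mk ml hc]; split.
  - by move=> x y lxy; apply/mrA/mk.
  - by move=> x y lxy; apply/mrA/ml.
  - by case: hc => h; [left|right] => x; apply/mrA/h.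
have F3 := fence_trans F1 F2.
have F4 : fence (adjC leA CA) (fun x => rA (rA (q (rB (p x))))) (fun x => rA (rA (id x))).
  apply: (fence_map (F := fun k : A -> A => fun x => rA (k x))) F3.
  move=> k l [mk ml hc]; split.
  - by move=> x _; split; apply: rAC.
  - by move=> x y _ _ lxy; split; apply/mrA; [apply: mk|apply: ml].
  - by case: hc => h; [left|right] => x _; apply/mrA/h.
move=> x xC.
have := fence_id rf an tr nb F4 _ xC; rewrite rAid ?rAC //; apply.
by move=> y yC; rewrite !rAid.
Qed.

Theorem mainTheorem8 (R : realType) (X Y : finType)
  (OX : {set {set X}}) (OY : {set {set Y}}) :
  finT0space OX -> finT0space OY ->
  homotopy_equivalent R OX OY ->
  rankbar R OX = rankbar R OY.
Proof.
move=> hX hY [f [g [cf cg hgf hfg]]].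
have [tX _] := hX; have [tY _] := hY.
have [rfX anX trX] := fle_po hX; have [rfY anY trY] := fle_po hY.
have mf := cont_mono tX tY cf; have mg := cont_mono tY tX cg.
have Fgf : fence (adjG (fle OX) (fle OX)) (g \o f) id.
  apply: (homotopic_fence tX tX _ _ hgf); [by move=> x y /mf /mg | by move=> ??].
have Ffg : fence (adjG (fle OY) (fle OY)) (f \o g) id.
  apply: (homotopic_fence tY tY _ _ hfg); [by move=> x y /mg /mf | by move=> ??].
have [CX [rX [mrX rXC rXid FrX [nbX chiX]]]] := core_exists R rfX anX trX.
have [CY [rY [mrY rYC rYid FrY [nbY chiY]]]] := core_exists R rfY anY trY.
have GF := core_fix rfX anX trX mf mg mrX mrY rXC rXid FrY Fgf nbX.
have FG := core_fix rfY anY trY mg mf mrY mrX rYC rYid FrX Ffg nbY.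
have mF : mono (fle OX) (fle OY) (fun x => rY (f x)) by move=> x y /mf /mrY.
have mG : mono (fle OY) (fle OX) (fun y => rX (g y)) by move=> x y /mg /mrX.
have chiXY : chi R (fle OX) setT <-> chi R (fle OY) setT.
  rewrite -chiX -chiY; split.
    by apply: (chi_iso (F := fun x => rY (f x)) (G := fun y => rX (g y))).
  by apply: (chi_iso (F := fun y => rX (g y)) (G := fun x => rY (f x))).
have [P1 P2] := rank_char R rfX anX trX.
have [Q1 Q2] := rank_char R rfY anY trY.
case: (classic (chi R (fle OX) setT)) => h.
  have e1 : rankbar R OX = 1%N := P1 h.
  have e2 : rankbar R OY = 1%N := Q1 (proj1 chiXY h).
  by rewrite e1 e2.
have e1 : rankbar R OX = 0%N := P2 h.
have e2 : rankbar R OY = 0%N by apply: Q2 => /(proj2 chiXY).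
by rewrite e1 e2.
Qed.
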